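(* In the setting of the context, assume the matrix representing $A$ with respect to the fixed feasible basis has constant row sum $\theta_r$ (i.e. $c_i+a_i+b_i=\theta_r$ for $0\le i\le d$), where $\theta_r$ is an eigenvalue of $A$. Let $s\in\{0,\dots,d\}$ with $s\ne r$. The following are equivalent: (i) in $\Delta$, vertex $r$ is adjacent to vertex $s$ and to no other vertex; (ii) for $0\le i\le d$, $$c_i\theta^*_{i-1}+a_i\theta^*_i+b_i\theta^*_{i+1}-\theta_r\theta^*_i=(\theta_s-\theta_r)(\theta^*_i-a^*_r)$$ (terms with $c_0=0$ or $b_d=0$ vanish), and $A^*$ is not a scalar multiple of $I$.
   Context: Let $\mathbb F$ be a field, $d\ge1$, $V$ an $\mathbb F$-vector space of dimension $d+1$, $\mathcal A=\mathrm{End}(V)$ with identity $I$. Let $E^*_0,\dots,E^*_d\in\mathcal A$ satisfy $E^*_iE^*_j=\delta_{i,j}E^*_i$, $\mathrm{rank}(E^*_i)=1$. Let $A\in\mathcal A$ satisfy $E^*_iAE^*_j=0$ if $|i-j|>1$ and $\neq0$ if $|i-j|=1$. Assume $A$ has $d+1$ distinct eigenvalues $\theta_0,\dots,\theta_d\in\mathbb F$ with primitive idempotents $E_i=\prod_{j\ne i}\frac{A-\theta_jI}{\theta_i-\theta_j}$. Let $\theta^*_i\in\mathbb F$, $A^*=\sum_i\theta^*_iE^*_i$, $a^*_i=\mathrm{tr}(E_iA^* )$. Let $\Delta$ be the graph on $\{0,\dots,d\}$ with $i\sim j$ iff $i\ne j$ and $E_iA^*E_j\ne0$. A basis $v_0,\dots,v_d$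 of $V$ is feasible if $v_i\in E^*_iV$ for all $i$; fix one. Then $Av_i=b_{i-1}v_{i-1}+a_iv_i+c_{i+1}v_{i+1}$ ($v_{-1}=v_{d+1}=0$), with $a_i=\mathrm{tr}(E^*_iA)$, nonzero $b_0,\dots,b_{d-1}$, $c_1,\dots,c_d$, and $b_d=c_0=0$; i.e. the representing matrix has diagonal $a_i$, $(i,i+1)$-entry $b_i$, $(i,i-1)$-entry $c_i$. *)

(* Defs.v *)
(* V = 'cV[F]_(d.+1) (column vectors), End(V) = 'M[F]_(d.+1). *)
From HB Require Import structures.
From mathcomp Require Import all_boot all_order all_algebra.
Set Implicit Arguments. Unset Strict Implicit. Unset Printing Implicit Defensive.
Import Order.TTheory GRing.Theory Num.Theory.
Local Open Scope ring_scope.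

Section Defs.
Variables (F : fieldType) (n : nat).

Definition prim_idem (A : 'M[F]_n.+1) (theta : 'I_n.+1 -> F) (i : 'I_n.+1)
  : 'M[F]_n.+1 :=
  \prod_(j < n.+1 | j != i) ((theta i - theta j)^-1 *: (A - (theta j)%:M)).

Definition dual_mx (Estar : 'I_n.+1 -> 'M[F]_n.+1) (thetas : 'I_n.+1 -> F)
  : 'M[F]_n.+1 := \sum_(i < n.+1) thetas i *: Estar i.

Definition delta_adj (E : 'I_n.+1 -> 'M[F]_n.+1) (Astar : 'M[F]_n.+1)
  (i j : 'I_n.+1) : bool := (i != j) && (E i *m Astar *m E j != 0).

Definition basis_mx (v : 'I_n.+1 -> 'cV[F]_n.+1) : 'M[F]_n.+1 :=
  \matrix_(k, j) v j k ord0.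

(* matrix representing A w.r.t. the basis v: A v_j = sum_i (rep i j) v_i *)
Definition rep_mx (v : 'I_n.+1 -> 'cV[F]_n.+1) (A : 'M[F]_n.+1) : 'M[F]_n.+1 :=
  invmx (basis_mx v) *m A *m basis_mx v.

(* nat-indexed entries: a_i (diagonal), b_i ((i,i+1)-entry, b_n = 0),
   c_i ((i,i-1)-entry, c_0 = 0) *)
Definition coef_a (B : 'M[F]_n.+1) (i : nat) : F := B (inord i) (inord i).
Definition coef_b (B : 'M[F]_n.+1) (i : nat) : F :=
  if (i < n)%N then B (inord i) (inord i.+1) else 0.
Definition coef_c (B : 'M[F]_n.+1) (i : nat) : F :=
  if (0 < i)%N then B (inord i) (inord i.-1) else 0.

End Defs.

(* Main.v *)
Require Import Defs.
From HB Require Import structures.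
From mathcomp Require Import all_boot all_order all_algebra.
From mathcomp Require Import zify ring.
Import Order.TTheory GRing.Theory Num.Theory.
Local Open Scope ring_scope.
Set Implicit Arguments. Unset Strict Implicit. Unset Printing Implicit Defensive.

Section Lag.
Variables (F : fieldType) (n : nat) (theta : 'I_n.+1 -> F).
Hypothesis th_inj : injective theta.

Definition lag j : {poly F} :=
  \prod_(k < n.+1 | k != j) ((theta j - theta k)^-1 *: ('X - (theta k)%:P)).

Lemma lag_eval j i : (lag j).[theta i] = (i == j)%:R.
Proof.
rewrite /lag horner_prod.
have [->|nij] := eqVneq i j.
  rewrite big1 // => k kj; rewrite hornerZ hornerXsubC mulVf //.
  by rewrite subr_eq0; apply: contra kj => /eqP/th_inj ->.
rewrite (bigD1 i) //= hornerZ hornerXsubC subrr mulr0 mul0r //.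
Qed.

Lemma lag_size j : (size (lag j) <= n.+1)%N.
Proof.
rewrite /lag scaler_prod.
apply: leq_trans (size_scale_leq _ _) _.
rewrite -big_filter size_prod_XsubC ltnS size_filter.
have -> : count (fun i => i != j) (index_enum 'I_n.+1) = #|predC1 j|.
  by rewrite cardE /enum_mem size_filter.
by rewrite cardC1 card_ord.
Qed.

Lemma lag_sum : \sum_j lag j = 1.
Proof.
apply/eqP; rewrite -subr_eq0; apply/eqP.
set p := _ - 1.
have sz : (size p <= n.+1)%N.
  rewrite /p; apply: leq_trans (size_add _ _) _.
  rewrite geq_max size_polyN size_poly1 /= andbT.
  elim/big_ind: _ => //; first by rewrite size_poly0.
    by move=> x y hx hy; apply: leq_trans (size_add _ _) _; rewrite geq_max hx hy.
  by move=> j _; apply: lag_size.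
apply/eqP; apply: contraT => pn0.
have := @max_poly_roots _ p [seq theta i | i <- enum 'I_n.+1] pn0.
rewrite size_map size_enum_ord map_inj_uniq ?enum_uniq // => H.
have : (n.+1 < size p)%N.
  apply: H => //; apply/allP => x /mapP [i _ ->].
  rewrite /root /p hornerD hornerN hornerC horner_sum.
  rewrite (bigD1 i) //= lag_eval eqxx big1 ?addr0 ?subrr //.
  by move=> j ji; rewrite lag_eval eq_sym (negPf ji).
by rewrite ltnNge sz.
Qed.

Lemma horner_lag (M : 'M[F]_n.+1) j : horner_mx M (lag j) = prim_idem M theta j.
Proof.
rewrite /lag rmorph_prod /prim_idem; apply: eq_bigr => k _.
by rewrite -mul_polyC rmorphM /= horner_mx_C -mulmxE mul_scalar_mx rmorphB /= horner_mx_X horner_mx_C.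
Qed.

Lemma sum_prim (M : 'M[F]_n.+1) : \sum_j prim_idem M theta j = 1.
Proof.
rewrite -(eq_bigr _ (fun j _ => horner_lag M j)) -rmorph_sum lag_sum.
exact: rmorph1.
Qed.

Lemma prim_eigen (M : 'M[F]_n.+1) m (Y : 'M[F]_(n.+1, m)) (l : F) j :
  M *m Y = l *: Y ->
  prim_idem M theta j *m Y =
    (\prod_(k < n.+1 | k != j) ((theta j - theta k)^-1 * (l - theta k))) *: Y.
Proof.
move=> HY; rewrite /prim_idem.
apply: (big_ind2 (fun X c => X *m Y = c *: Y)).
- by rewrite mul1mx scale1r.
- move=> x1 c1 x2 c2 h1 h2.
  by rewrite -mulmxE -mulmxA h2 -scalemxAr h1 scalerA mulrC.
- move=> k _; rewrite -scalemxAl mulmxBl HY mul_scalar_mx -scalerBl scalerA //.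
Qed.

Lemma prod_zero (A : 'M[F]_n.+1) :
  (forall i, eigenvalue A (theta i)) ->
  \prod_(j < n.+1) (A - (theta j)%:M) = 0.
Proof.
move=> he.
set rs := [seq theta i | i <- enum 'I_n.+1].
have := @all_roots_prod_XsubC _ (char_poly A) rs.
rewrite size_char_poly size_map size_enum_ord uniq_rootsE map_inj_uniq ?enum_uniq //.
have Hr : all (root (char_poly A)) rs.
  apply/allP => x /mapP [i _ ->]; by rewrite -eigenvalue_root_char.
move=> /(_ erefl Hr isT) H.
have := Cayley_Hamilton A.
rewrite H.
rewrite (monicP (char_poly_monic A)) scale1r rmorph_prod big_map enumT.
move=> <-; apply: eq_bigr => j _.
by rewrite rmorphB /= horner_mx_X horner_mx_C.
Qed.

End Lag.

Section Eig.
Variables (F : fieldType) (n : nat) (theta : 'I_n.+1 -> F).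
Hypothesis th_inj : injective theta.

Lemma prim_self (M : 'M[F]_n.+1) m (Y : 'M[F]_(n.+1, m)) j :
  M *m Y = theta j *: Y -> prim_idem M theta j *m Y = Y.
Proof.
move=> HY; rewrite (prim_eigen theta j HY) big1 ?scale1r // => k kj.
rewrite mulVf // subr_eq0; apply: contra kj => /eqP/th_inj ->; done.
Qed.

Lemma prim_other (M : 'M[F]_n.+1) m (Y : 'M[F]_(n.+1, m)) j k :
  M *m Y = theta k *: Y -> k != j -> prim_idem M theta j *m Y = 0.
Proof.
move=> HY kj; rewrite (prim_eigen theta j HY) (bigD1 k) //= subrr mulr0 mul0r scale0r //.
Qed.

Lemma prim_kill (M : 'M[F]_n.+1) j :
  \prod_(k < n.+1) (M - (theta k)%:M) = 0 ->
  M *m prim_idem M theta j = theta j *: prim_idem M theta j.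
Proof.
move=> Hp; apply/eqP; rewrite -subr_eq0 -mul_scalar_mx -mulmxBl; apply/eqP.
have e : ('X - (theta j)%:P) * lag theta j =
   (\prod_(k < n.+1 | k != j) (theta j - theta k)^-1) *: \prod_(k < n.+1) ('X - (theta k)%:P).
  by rewrite /lag scaler_prod -scalerAr; congr (_ *: _); rewrite [RHS](bigD1 j).
have := congr1 (horner_mx M) e.
rewrite rmorphM /= horner_lag rmorphB /= horner_mx_X horner_mx_C mulmxE => ->.
rewrite -mul_polyC rmorphM /= horner_mx_C.
have -> : horner_mx M (\prod_(k < n.+1) ('X - (theta k)%:P)) = \prod_(k < n.+1) (M - (theta k)%:M).
  rewrite rmorph_prod; apply: eq_bigr => k _.
  by rewrite rmorphB /= horner_mx_X horner_mx_C.
by rewrite Hp mulr0.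
Qed.
End Eig.


Section Tri.
Variables (F : fieldType) (d : nat) (B : 'M[F]_d.+1).
Hypothesis Hzero : forall i j : 'I_d.+1, (i.+1 < j)%N || (j.+1 < i)%N -> B i j = 0.

Lemma tri (x : 'cV[F]_d.+1) (i : nat) : (i <= d)%N ->
  (B *m x) (inord i) 0 = coef_c B i * x (inord i.-1) 0
     + coef_a B i * x (inord i) 0 + coef_b B i * x (inord i.+1) 0.
Proof.
move=> hi; rewrite mxE.
set k : 'I_d.+1 := inord i.
have hk : (k : nat) = i by rewrite inordK.
pose f j := B k j * x j 0.
rewrite (eq_bigr (fun j : 'I_d.+1 => (if (j.+1 == i)%N then f j else 0)
   + (if (j == i :> nat) then f j else 0) + (if (j == i.+1 :> nat) then f j else 0))); last first.
  move=> j _; rewrite /f.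
  have [h1|h2|h3] := ltngtP (j:nat) i.
  - rewrite (_ : (j == i.+1 :> nat) = false); last by apply/eqP; lia.
    rewrite !addr0; case: eqP => // hne.
    rewrite Hzero ?mul0r //; apply/orP; right; rewrite hk; lia.
  - rewrite (_ : (j.+1 == i)%N = false); last by apply/eqP; lia.
    rewrite !add0r; case: eqP => // hne.
    rewrite Hzero ?mul0r //; apply/orP; left; rewrite hk; lia.
  - rewrite (_ : (j.+1 == i)%N = false); last by apply/eqP; lia.
    by rewrite (_ : (j == i.+1 :> nat) = false) ?add0r ?addr0 //; apply/eqP; lia.
rewrite !big_split /=.
congr (_ + _ + _).
- rewrite /coef_c; case: (posnP i) => [->|ip].
    by rewrite mul0r big1 // => j _.
  rewrite -big_mkcond (big_pred1 (inord i.-1)) /f ?mulrA //.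
  move=> j /=; rewrite -val_eqE /= inordK; last by lia.
  by apply/eqP/eqP; lia.
- rewrite /coef_a -big_mkcond (big_pred1 k) /f //.
  by move=> j /=; rewrite -val_eqE /= hk.
- rewrite /coef_b; case: (ltnP i d) => [id|di].
    rewrite -big_mkcond (big_pred1 (inord i.+1)) /f //.
    move=> j /=; rewrite -val_eqE /= inordK //.
  rewrite mul0r big1 // => j _.
  by rewrite (_ : (j == i.+1 :> nat) = false) //; apply/eqP; have := ltn_ord j; lia.
Qed.
End Tri.

Section Sym.
Variables (F : fieldType) (d : nat) (B : 'M[F]_d.+1).
Hypothesis Hzero : forall i j : 'I_d.+1, (i.+1 < j)%N || (j.+1 < i)%N -> B i j = 0.
Hypothesis Hnz : forall i j : 'I_d.+1, (j == i.+1 :> nat) || (i == j.+1 :> nat) -> B i j != 0.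

Fixpoint dv (i : nat) : F :=
  if i is i'.+1 then dv i' * B (inord i') (inord i'.+1) / B (inord i'.+1) (inord i') else 1.

Lemma dv_nz i : (i <= d)%N -> dv i != 0.
Proof.
elim: i => [|i IH] hi /=; first by rewrite oner_eq0.
rewrite mulf_neq0 ?invr_eq0 ?mulf_neq0 ?IH ?(ltnW hi) //; apply: Hnz;
  rewrite !inordK //; try lia; by rewrite eqxx ?orbT.
Qed.

Lemma dvB (a b : 'I_d.+1) : dv a * B a b = B b a * dv b.
Proof.
have [h|h] := boolP ((a.+1 < b)%N || (b.+1 < a)%N).
  rewrite !Hzero ?mulr0 ?mul0r //; by rewrite orbC.
have [e|e|e] : [\/ b = a, (b : nat) = a.+1 | (a : nat) = b.+1].
  have := ltn_ord a; have := ltn_ord b; move: h.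
  case: a b => [a ha] [b hb] /= h _ _.
  have [e0|] := eqVneq b a; first by apply: Or31; apply: val_inj; rewrite /= e0.
  move=> ne; have [e|] := eqVneq b a.+1; first by apply: Or32.
  move=> ne2; apply: Or33; lia.
- by rewrite e mulrC.
- have ea : inord a = a by rewrite inord_val.
  have eb : inord a.+1 = b by apply: val_inj; rewrite /= inordK -e.
  rewrite e /= ea eb [RHS]mulrC mulfVK //; apply: Hnz; by rewrite e eqxx orbT.
- have eb : inord b = b by rewrite inord_val.
  have ea : inord b.+1 = a by apply: val_inj; rewrite /= inordK -e.
  rewrite e /= eb ea mulfVK; first exact: mulrC. apply: Hnz; by rewrite e eqxx orbT.
Qed.

Definition Dm := diag_mx (\row_(i < d.+1) dv i).

Lemma DmB : Dm *m B = B^T *m Dm.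
Proof. by apply/matrixP => i j; rewrite mul_diag_mx mul_mx_diag !mxE dvB. Qed.

Lemma Dm_horner p : Dm *m horner_mx B p = (horner_mx B p)^T *m Dm.
Proof.
elim/poly_ind: p => [|p c IH]; first by rewrite rmorph0 mulmx0 trmx0 mul0mx.
rewrite rmorphD rmorphM /= horner_mx_X horner_mx_C.
set hp := horner_mx B p.
have comm : B *m hp = hp *m B by apply: comm_mx_horner.
rewrite -mulmxE mulmxDr mulmxA IH -mulmxA DmB mulmxA -trmx_mul comm.
rewrite linearD /= tr_scalar_mx mulmxDl; congr (_ + _).
by rewrite scalar_mxC.
Qed.

Lemma Dm_T (t : 'rV[F]_d.+1) : Dm *m diag_mx t = (diag_mx t)^T *m Dm.
Proof.
rewrite tr_diag_mx; apply/matrixP => i j; rewrite mul_diag_mx mul_mx_diag !mxE.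
by case: eqVneq => [->|_]; [rewrite mulrC | rewrite !mulr0n mulr0 mul0r].
Qed.

Lemma sym_zero (theta : 'I_d.+1 -> F) (t : 'rV[F]_d.+1) i j :
  let E := prim_idem B theta in
  E i *m diag_mx t *m E j = 0 -> E j *m diag_mx t *m E i = 0.
Proof.
move=> E H.
have hE k : Dm *m E k = (E k)^T *m Dm by rewrite /E -horner_lag Dm_horner.
have key : Dm *m (E i *m diag_mx t *m E j) = (E j *m diag_mx t *m E i)^T *m Dm.
  rewrite !mulmxA hE -!mulmxA (mulmxA Dm) Dm_T -(mulmxA _ Dm) hE.
  by rewrite !trmx_mul !mulmxA.
move: key; rewrite H mulmx0 => /esym key.
apply/matrixP => a b; have := congr1 (fun M : 'M[F]_d.+1 => M b a) key.
rewrite mul_mx_diag !mxE => /eqP; rewrite mulf_eq0 => /orP [/eqP //|].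
by move/negbTE: (dv_nz (ltnSE (ltn_ord a))) => ->.
Qed.

Lemma sym0 (theta : 'I_d.+1 -> F) (t : 'rV[F]_d.+1) i j :
  prim_idem B theta i *m diag_mx t *m prim_idem B theta j = 0 ->
  prim_idem B theta j *m diag_mx t *m prim_idem B theta i = 0.
Proof. exact (@sym_zero theta t i j). Qed.

Lemma ker1 (lam : F) (y : 'cV[F]_d.+1) :
  B *m (const_mx 1 : 'cV[F]_d.+1) = lam *: (const_mx 1 : 'cV[F]_d.+1) -> B *m y = lam *: y ->
  y = y 0 0 *: (const_mx 1 : 'cV[F]_d.+1).
Proof.
move=> h1 hy.
set y' := y - y 0 0 *: (const_mx 1 : 'cV[F]_d.+1).
have hy' : B *m y' = lam *: y' by rewrite mulmxBr hy -scalemxAr h1 scalerBr scalerA mulrC -scalerA.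
have y00 : y' 0 0 = 0 by rewrite !mxE mulr1 subrr.
have main : forall m, (m <= d)%N -> forall k, (k <= m)%N -> y' (inord k) 0 = 0.
  elim => [|m IH] hm k hk.
    by move: hk; rewrite leqn0 => /eqP ->; rewrite (_ : inord 0 = 0) //; apply: val_inj; rewrite /= inordK.
  rewrite leq_eqVlt in hk; case/orP: hk => [/eqP ->|hk]; last by apply: IH => //; lia.
  have := tri Hzero y' (ltnW hm); rewrite hy' mxE.
  rewrite (IH (ltnW hm) m) // (IH (ltnW hm) m.-1) ?leq_pred // !mulr0 !add0r.
  rewrite /coef_b hm => /esym /eqP; rewrite mulf_eq0 => /orP [|/eqP //].
  move=> hb; have := @Hnz (inord m) (inord m.+1); rewrite hb !inordK ?eqxx; [by move=> /(_ isT) | lia | lia].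
have h0 : y' = 0.
  apply/matrixP => i j; rewrite (ord1 j) [RHS]mxE.
  by rewrite -(inord_val i) (main d) //; have := ltn_ord i; lia.
by apply/eqP; rewrite -subr_eq0 -/y' h0.
Qed.
End Sym.


Section Core.
Variables (F : fieldType) (d : nat) (B : 'M[F]_d.+1) (theta t : 'I_d.+1 -> F) (r s : 'I_d.+1).
Hypothesis Hzero : forall i j : 'I_d.+1, (i.+1 < j)%N || (j.+1 < i)%N -> B i j = 0.
Hypothesis Hnz : forall i j : 'I_d.+1, (j == i.+1 :> nat) || (i == j.+1 :> nat) -> B i j != 0.
Hypothesis th_inj : injective theta.
Hypothesis Hprod : \prod_(k < d.+1) (B - (theta k)%:M) = 0.
Local Notation ones := (const_mx 1 : 'cV[F]_d.+1).
Hypothesis Hrow : B *m ones = theta r *: ones.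
Hypothesis hsr : s != r.

Local Notation T := (diag_mx (\row_i t i)).
Local Notation tv := (\col_i t i : 'cV[F]_d.+1).
Local Notation E := (prim_idem B theta).
Local Notation a := (\tr (E r *m T)).
Local Notation z := (row 0 (E r)).

Lemma Er1 : E r *m ones = ones.
Proof. exact (prim_self th_inj Hrow). Qed.

Lemma Ej1 j : j != r -> E j *m ones = 0.
Proof. by move=> jr; apply: prim_other Hrow _; rewrite eq_sym. Qed.

Lemma BE j : B *m E j = theta j *: E j.
Proof. exact: prim_kill. Qed.

Lemma Erdef : E r = ones *m z.
Proof.
apply/matrixP => i c.
have hc : B *m col c (E r) = theta r *: col c (E r).
  apply/matrixP => k l; rewrite !mxE.
  have := congr1 (fun M : 'M[F]_d.+1 => M k c) (BE r); rewrite !mxE => <-.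
  by apply: eq_bigr => m _; rewrite !mxE.
have := ker1 Hzero Hnz Hrow hc.
move=> /(congr1 (fun M : 'cV[F]_d.+1 => M i 0)); rewrite !mxE => ->.
by rewrite big_ord1 !mxE mulr1 mul1r.
Qed.

Lemma T1 : T *m ones = tv.
Proof. by apply/matrixP => i j; rewrite mul_diag_mx !mxE mulr1. Qed.

Lemma TEr : T *m E r = tv *m z.
Proof. by rewrite {1}Erdef mulmxA T1. Qed.

Lemma a_eq : a = (z *m tv) 0 0.
Proof.
rewrite {1}Erdef -mulmxA mxtrace_mulC -mulmxA T1.
by rewrite /mxtrace big_ord1.
Qed.

Lemma Ertv : E r *m tv = a *: ones.
Proof.
rewrite {1}Erdef -mulmxA a_eq; apply/matrixP => i j.
by rewrite !mxE big_ord1 !mxE mul1r (ord1 j) mulr1.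
Qed.

Lemma ErEs : E r *m E s = 0.
Proof. by apply: prim_other (BE s) _. Qed.

Lemma Tscal c : T = c%:M -> E r *m T *m E s = 0.
Proof. by move=> ->; rewrite mul_mx_scalar -scalemxAl ErEs scaler0. Qed.

Lemma dir1 : (forall j, delta_adj E T r j <-> j = s) ->
  (B - (theta s)%:M) *m (tv - a *: ones) = 0 /\ ~ exists c, T = c%:M.
Proof.
move=> H.
have Hs : E r *m T *m E s != 0 by have := (H s).2 erefl; case/andP.
have Hj j : j != r -> j != s -> E j *m T *m E r = 0.
  move=> jr js; apply: (sym0 Hzero Hnz).
  apply/eqP; apply: contraT => hne.
  have := (H j).1; rewrite /delta_adj eq_sym jr hne => /(_ isT) /eqP.
  by rewrite (negPf js).
split; last by move=> [c hc]; move: Hs; rewrite (Tscal hc) eqxx.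
set x := tv - a *: ones.
have Ex j : j != s -> E j *m x = 0.
  case: (eqVneq j r) => [->|jr] js.
    by rewrite /x mulmxBr -scalemxAr Er1 Ertv subrr.
  rewrite /x mulmxBr -scalemxAr Ej1 // scaler0 subr0.
  by rewrite -T1 -{1}Er1 !mulmxA Hj // mul0mx.
have xEs : x = E s *m x.
  rewrite -{1}(mul1mx x) (_ : 1%:M = \sum_j E j); last by rewrite (sum_prim th_inj B).
  rewrite mulmx_suml (bigD1 s) //=.
  by rewrite big1 ?addr0 // => j js; apply: Ex.
by rewrite xEs mulmxA mulmxBl BE mul_scalar_mx subrr mul0mx.
Qed.

Lemma dir2 : (B - (theta s)%:M) *m (tv - a *: ones) = 0 /\ ~ (exists c, T = c%:M) ->
  (forall j, delta_adj E T r j <-> j = s).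
Proof.
move=> [Hx Hns].
set x := tv - a *: ones in Hx.
have Bx : B *m x = theta s *: x.
  by apply/eqP; rewrite -subr_eq0 -mul_scalar_mx -mulmxBl Hx.
have xnz : x != 0.
  apply/eqP => x0; apply: Hns; exists a.
  apply/matrixP => i j; rewrite !mxE.
  have := congr1 (fun M : 'cV[F]_d.+1 => M i 0) x0; rewrite /x !mxE mulr1.
  by move/eqP; rewrite subr_eq0 => /eqP ->.
have etv : tv = x + a *: ones by rewrite /x subrK.
have Etv j : E j *m T *m E r = (E j *m tv) *m z by rewrite -mulmxA TEr mulmxA.
have EsT : E s *m tv = x.
  by rewrite etv mulmxDr -scalemxAr Ej1 // scaler0 addr0 (prim_self th_inj Bx).
have EjT j : j != s -> j != r -> E j *m tv = 0.
  move=> js jr; rewrite etv mulmxDr -scalemxAr Ej1 // scaler0 addr0.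
  by apply: prim_other Bx _; rewrite eq_sym.
move=> j; split.
- case/andP => rj hne; apply/eqP; apply: contraT => js.
  move: hne; rewrite (sym0 Hzero Hnz) ?eqxx //.
  by rewrite Etv EjT ?mul0mx // eq_sym.
- move=> ->; rewrite /delta_adj eq_sym hsr /=.
  apply/eqP => h0; have := sym0 Hzero Hnz h0.
  move=> /(congr1 (fun M => M *m ones)); rewrite -mulmxA Er1 mul0mx -mulmxA T1 EsT.
  by move/eqP; rewrite (negPf xnz).
Qed.

Lemma eqn_iff (a0 : F) :
  (forall i : nat, (i <= d)%N ->
     coef_c B i * t (inord i.-1) + coef_a B i * t (inord i) + coef_b B i * t (inord i.+1)
       - theta r * t (inord i) = (theta s - theta r) * (t (inord i) - a0))
  <-> (B - (theta s)%:M) *m (tv - a0 *: ones) = 0.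
Proof.
have entry (i : 'I_d.+1) : ((B - (theta s)%:M) *m (tv - a0 *: ones)) i 0 =
   (B *m tv) i 0 - theta r * t i - (theta s - theta r) * (t i - a0).
  rewrite !mulmxBr !mulmxBl !mul_scalar_mx -!scalemxAr Hrow !mxE.
  ring.
split.
- move=> H; apply/matrixP => i j; rewrite (ord1 j) entry [RHS]mxE.
  have hi : (i <= d)%N by rewrite -ltnS.
  have e := tri Hzero tv hi; rewrite inord_val in e.
  have := H i hi; rewrite inord_val e !mxE => ->.
  by rewrite subrr.
- move=> H i hi; have := congr1 (fun M : 'cV[F]_d.+1 => M (inord i) 0) H.
  rewrite entry (tri Hzero) // !mxE => /eqP; rewrite subr_eq0 => /eqP.
  done.
Qed.

End Core.


Section Conj.
Variables (F : fieldType) (n : nat) (P : 'M[F]_n.+1).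
Hypothesis PU : P \in unitmx.
Definition cj (X : 'M[F]_n.+1) := invmx P *m X *m P.

Lemma cjM X Y : cj (X *m Y) = cj X *m cj Y.
Proof. by rewrite /cj !mulmxA mulmxK. Qed.

Lemma cj1 : cj 1%:M = 1%:M.
Proof. by rewrite /cj mulmx1 mulVmx. Qed.

Lemma cjC c : cj c%:M = c%:M.
Proof. by rewrite /cj mul_mx_scalar -scalemxAl mulVmx // scalemx1. Qed.

Lemma cjB X Y : cj (X - Y) = cj X - cj Y.
Proof. by rewrite /cj mulmxBr mulmxBl. Qed.

Lemma cjZ c X : cj (c *: X) = c *: cj X.
Proof. by rewrite /cj -scalemxAr -scalemxAl. Qed.

Lemma cj0 : cj 0 = 0.
Proof. by rewrite /cj mulmx0 mul0mx. Qed.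

Lemma cj_inv X : X = P *m cj X *m invmx P.
Proof. by rewrite /cj !mulmxA mulmxV // mul1mx mulmxK. Qed.

Lemma cj_eq0 X : (cj X == 0) = (X == 0).
Proof.
apply/eqP/eqP => [h|->]; last exact: cj0.
by rewrite (cj_inv X) h mulmx0 mul0mx.
Qed.

Lemma cj_inj X Y : cj X = cj Y -> X = Y.
Proof.
move=> h; apply/eqP; rewrite -subr_eq0 -cj_eq0 cjB h subrr //.
Qed.

Lemma cj_prod (I : finType) (Q : pred I) (G : I -> 'M[F]_n.+1) :
  cj (\prod_(i | Q i) G i) = \prod_(i | Q i) cj (G i).
Proof.
apply: (big_morph cj) => [x y|]; first by rewrite -!mulmxE cjM.
exact: cj1.
Qed.

Lemma cj_prodB (theta : 'I_n.+1 -> F) X :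
  cj (\prod_(k < n.+1) (X - (theta k)%:M)) = \prod_(k < n.+1) (cj X - (theta k)%:M).
Proof.
rewrite cj_prod; apply: eq_bigr => k _; by rewrite cjB cjC.
Qed.

Lemma cj_prim (A : 'M[F]_n.+1) theta j :
  cj (prim_idem A theta j) = prim_idem (cj A) theta j.
Proof.
rewrite /prim_idem cj_prod; apply: eq_bigr => k _.
by rewrite cjZ cjB cjC.
Qed.

Lemma cj_tr X : \tr (cj X) = \tr X.
Proof. by rewrite /cj -mulmxA mxtrace_mulC mulmxK. Qed.

End Conj.

Lemma dmx (F : fieldType) n (M : 'M[F]_n) i j :
  delta_mx i i *m M *m delta_mx j j = M i j *: delta_mx i j.
Proof.
apply/matrixP => k l; rewrite !mxE (bigD1 j) //= big1 ?addr0; last first.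
  by move=> m mj; rewrite !mxE (negbTE mj) andFb mulr0.
rewrite mxE (bigD1 i) //= big1 ?addr0; last first.
  by move=> m mi; rewrite !mxE (negbTE mi) andbF mul0r.
rewrite !mxE !eqxx !andbT.
by case: (k == i); case: (l == j); rewrite ?mul1r ?mulr1 ?mul0r ?mulr0.
Qed.


Unset Implicit Arguments.

Theorem proposition8p2 (F : fieldType) (d : nat) (hd : (0 < d)%N)
  (Estar : 'I_d.+1 -> 'M[F]_d.+1) (A : 'M[F]_d.+1)
  (theta thetas : 'I_d.+1 -> F) (v : 'I_d.+1 -> 'cV[F]_d.+1)
  (r s : 'I_d.+1)
  (hEE : forall i j : 'I_d.+1,
      Estar i *m Estar j = if i == j then Estar i else 0)
  (hrank : forall i, \rank (Estar i) = 1%N)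
  (hA0 : forall i j : 'I_d.+1, (i.+1 < j)%N || (j.+1 < i)%N ->
      Estar i *m A *m Estar j = 0)
  (hA1 : forall i j : 'I_d.+1, (j == i.+1 :> nat) || (i == j.+1 :> nat) ->
      Estar i *m A *m Estar j != 0)
  (htheta_inj : injective theta)
  (htheta_eig : forall i, eigenvalue A (theta i))
  (hv_basis : basis_mx v \in unitmx)
  (hv_feas : forall i, exists w : 'cV[F]_d.+1, v i = Estar i *m w)
  (hrowsum : forall i : nat, (i <= d)%N ->
      coef_c (rep_mx v A) i + coef_a (rep_mx v A) i + coef_b (rep_mx v A) i
        = theta r)
  (hsr : s != r) :
  let Astar := dual_mx Estar thetas in
  let E := prim_idem A theta in
  let B := rep_mx v A in
  let ths := fun k : nat => thetas (inord k) in
  let astar_r := \tr (E r *m Astar) in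
  (forall j, delta_adj E Astar r j <-> j = s)
  <->
  ((forall i : nat, (i <= d)%N ->
      coef_c B i * ths i.-1 + coef_a B i * ths i + coef_b B i * ths i.+1
        - theta r * ths i
      = (theta s - theta r) * (ths i - astar_r))
   /\ ~ (exists c : F, Astar = c%:M)).


Proof.
move=> Astar E Bm ths astar_r; rewrite {}/Bm {}/ths.
set Bm := rep_mx v A in hrowsum *.
set P := basis_mx v.
have PU : P \in unitmx := hv_basis.
have EP i : Estar i *m P = P *m delta_mx i i.
  apply/matrixP => k j; rewrite !mxE.
  rewrite [RHS](bigD1 i) //= [X in _ + X]big1 ?addr0; last first.
    by move=> l li; rewrite !mxE (negbTE li) /= mulr0.
  rewrite !mxE eqxx /=.
  have -> : \sum_l Estar i k l * P l j = (Estar i *m v j) k 0.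
    by rewrite mxE; apply: eq_bigr => l _; rewrite /P !mxE.
  have [w hw] := hv_feas j.
  rewrite hw mulmxA hEE; case: eqVneq => [->|ij].
    by rewrite mulr1 hw.
  by rewrite mulr0 mul0mx mxE.
have fE i : cj P (Estar i) = delta_mx i i by rewrite /cj -mulmxA EP mulKmx.
have fT : cj P Astar = diag_mx (\row_i thetas i).
  rewrite /Astar /dual_mx diag_mx_sum_delta /cj mulmx_sumr mulmx_suml.
  apply: eq_bigr => i _; rewrite -scalemxAr -scalemxAl mxE; congr (_ *: _).
  exact: (fE i).
have Hzero : forall i j : 'I_d.+1, (i.+1 < j)%N || (j.+1 < i)%N -> Bm i j = 0.
  move=> i j h; have := congr1 (cj P) (hA0 _ _ h); rewrite !(cjM PU) -[cj P A]/Bm !fE dmx cj0.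
  by move=> /(congr1 (fun M : 'M[F]_d.+1 => M i j)); rewrite !mxE !eqxx mulr1 => ->.
have Hnz : forall i j : 'I_d.+1, (j == i.+1 :> nat) || (i == j.+1 :> nat) -> Bm i j != 0.
  move=> i j h; apply/eqP => b0; have := hA1 _ _ h.
  by rewrite -(cj_eq0 PU) !(cjM PU) -[cj P A]/Bm !fE dmx b0 scale0r eqxx.
have Hprod : \prod_(k < d.+1) (Bm - (theta k)%:M) = 0.
  have h := prod_zero htheta_inj htheta_eig.
  have := cj_prodB PU theta A; rewrite h.
  move=> /esym; rewrite -[cj P A]/Bm => ->.
  by rewrite /cj mulmx0 mul0mx.
have Hrow : Bm *m (const_mx 1 : 'cV[F]_d.+1) = theta r *: (const_mx 1 : 'cV[F]_d.+1).
  apply/matrixP => i j; rewrite (ord1 j).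
  have hi : (i <= d)%N by rewrite -ltnS.
  have e := tri Hzero (const_mx 1) hi; rewrite inord_val in e.
  by rewrite e !mxE !mulr1 hrowsum.
have core1 := dir1 (t:=thetas) Hzero Hnz htheta_inj Hprod Hrow hsr.
have core2 := dir2 (t:=thetas) Hzero Hnz htheta_inj Hprod Hrow hsr.
have ha : astar_r = \tr (prim_idem Bm theta r *m diag_mx (\row_i thetas i)).
  by rewrite /astar_r /E -(cj_tr PU) (cjM PU) (cj_prim PU) fT.
have hadj j : delta_adj E Astar r j =
    delta_adj (prim_idem Bm theta) (diag_mx (\row_i thetas i)) r j.
  by rewrite /delta_adj /E -(cj_eq0 PU) !(cjM PU) !(cj_prim PU) fT.
have hsc : (exists c, Astar = c%:M) <-> (exists c, diag_mx (\row_i thetas i) = c%:M).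
  split => [[c hc]|[c hc]]; exists c; first by rewrite -fT hc cjC.
  by apply: (cj_inj PU); rewrite fT hc cjC.
split.
- move=> H.
  have H' : forall j, delta_adj (prim_idem Bm theta) (diag_mx (\row_i thetas i)) r j <-> j = s.
    by move=> j; rewrite -hadj.
  have [h1 h2] := core1 H'.
  split; last by rewrite hsc.
  rewrite ha; exact: ((eqn_iff thetas s Hzero Hrow _).2 h1).
- move=> [h1 h2] j; rewrite hadj; apply: core2; split; last by rewrite -hsc.
  apply: (eqn_iff thetas s Hzero Hrow _).1; by move: h1; rewrite ha.
Qed.
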